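(* Let $n,m,r\geq 1$, $\gamma>0$, $\tau_1,\tau_2>0$, $a\in\Delta_n^+$, $b\in\Delta_m^+$, and let $\xi^{(1)}\in\mathbb{R}_+^{n\times r}$, $\xi^{(2)}\in\mathbb{R}_+^{m\times r}$, $\xi^{(3)}\in\mathbb{R}_+^{r}$. Define, for $f_1\in\mathbb{R}^n$, $f_2\in\mathbb{R}^m$, $h_1,h_2\in\mathbb{R}^r$, $$\mathcal{D}(f_1,h_1,f_2,h_2):= - F_{\tau_1,a}^{*}(-f_1) - \frac{1}{\gamma}\langle e^{\gamma(f_1\oplus h_1)} -1, \xi^{(1)}\rangle - F_{\tau_2,b}^{*}(-f_2) - \frac{1}{\gamma} \langle e^{\gamma(f_2\oplus h_2)} -1, \xi^{(2)}\rangle - \frac{1}{\gamma}\langle e^{- \gamma(h_1 + h_2)} - 1,\xi^{(3)}\rangle.$$ Let $\tilde f_1\in\mathbb{R}^n$, $\tilde f_2\in\mathbb{R}^m$ and $\tilde h_1,\tilde h_2\in\mathbb{R}^r$. Then the problem $$\sup_{\lambda_1,\lambda_2\in\mathbb{R}} \mathcal{D}(\tilde f_1+\lambda_1,\tilde h_1-\lambda_1,\tilde f_2+\lambda_2,\tilde h_2-\lambda_2)$$ admits a unique solution $(\lambda_1^\star,\lambda_2^\star)$, given by $$\lambda_1^\star= \left(1- \frac{\tau_1\tau_2}{(1/\gamma +\tau_1)(1/\gamma+\tau_2)}\right)^{-1}\left(\frac{\tau_1/\gamma}{1/\gamma+\tau_1}c_1 - \frac{\tau_1/\gamma}{1/\gamma+\tau_1}\frac{\tau_2}{1/\gamma+\tau_2}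 c_2\right),$$ $$\lambda_2^\star= \left(1- \frac{\tau_1\tau_2}{(1/\gamma +\tau_1)(1/\gamma+\tau_2)}\right)^{-1}\left(\frac{\tau_2/\gamma}{1/\gamma+\tau_2}c_2 - \frac{\tau_1/\gamma}{1/\gamma +\tau_1}\frac{\tau_2}{1/\gamma+\tau_2} c_1\right),$$ where $$c_1:= \log\left( \frac{\langle\exp(- \tilde f_1/\tau_1),a\rangle}{\langle \exp(- \gamma ( \tilde h_1+ \tilde h_2)),\xi^{(3)}\rangle}\right),\qquad c_2:= \log\left( \frac{\langle\exp(- \tilde f_2/\tau_2),b\rangle}{\langle \exp(- \gamma ( \tilde h_1+ \tilde h_2)),\xi^{(3)}\rangle}\right).$$
   Context: $\Delta_n^+$ denotes the set of positive vectors in $\mathbb{R}^n$ summing to $1$. $\mathrm{KL}$ is the generalized Kullback–Leibler divergence $\mathrm{KL}(p|q):=\sum_i p_i\log(p_i/q_i)+q_i-p_i$. For $\tau>0$ and $z\geq 0$ coordinate-wise, $F_{\tau,z}(s):=\tau\,\mathrm{KL}(s|z)$, and $F_{\tau,z}^*(y):=\sup_s\{\langle s,y\rangle-F_{\tau,z}(s)\}$ is its convex conjugate. For $f\in\mathbb{R}^n$, $h\in\mathbb{R}^r$, $f\oplus h$ is the $n\times r$ matrix with entries $f_i+h_j$; adding a scalar $\lambda$ to a vector adds it to every coordinate; exponentials are entrywise, and $\langle\cdot,\cdot\rangle$ is the entrywise inner product. *)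

(* Defs.v *)
From mathcomp Require Import all_boot all_order all_algebra.
From mathcomp Require Import all_classical all_reals all_analysis.
Set Implicit Arguments. Unset Strict Implicit. Unset Printing Implicit Defensive.
Import Order.TTheory GRing.Theory Num.Theory.
Local Open Scope ring_scope.

Definition simplex_pos (R : realType) (n : nat) (a : 'I_n -> R) : Prop :=
  (forall i, 0 < a i) /\ \sum_(i < n) a i = 1.

(* Generalized KL divergence KL(p|q) = sum_i p_i log(p_i/q_i) + q_i - p_i,
   with the usual convex-analysis conventions: 0 log(0/q) = 0, and the value
   is +oo if some p_i < 0 or p_i > 0 with q_i = 0. *)
Definition KL (R : realType) (n : nat) (p q : 'I_n -> R) : \bar R :=
  if [forall i, (0 <= p i) && ((q i == 0) ==> (p i == 0))]
  then (\sum_(i < n) (p i * ln (p i / q i) + q i - p i))%:E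
  else +oo%E.

Definition Ffun (R : realType) (n : nat) (tau : R) (z s : 'I_n -> R) : \bar R :=
  (tau%:E * KL s z)%E.

Definition Fconj (R : realType) (n : nat) (tau : R) (z y : 'I_n -> R) : \bar R :=
  ereal_sup (range (fun s : 'I_n -> R =>
     ((\sum_(i < n) s i * y i)%:E - Ffun tau z s)%E)).

Definition Dobj (R : realType) (n m r : nat) (gamma tau1 tau2 : R)
  (a : 'I_n -> R) (b : 'I_m -> R)
  (xi1 : 'I_n -> 'I_r -> R) (xi2 : 'I_m -> 'I_r -> R) (xi3 : 'I_r -> R)
  (f1 : 'I_n -> R) (h1 : 'I_r -> R) (f2 : 'I_m -> R) (h2 : 'I_r -> R) : \bar R :=
  (- Fconj tau1 a (fun i => (- f1 i)%R)
   - (gamma^-1 * \sum_(i < n) \sum_(j < r)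
        (expR (gamma * (f1 i + h1 j)) - 1) * xi1 i j)%:E
   - Fconj tau2 b (fun i => (- f2 i)%R)
   - (gamma^-1 * \sum_(i < m) \sum_(j < r)
        (expR (gamma * (f2 i + h2 j)) - 1) * xi2 i j)%:E
   - (gamma^-1 * \sum_(j < r)
        (expR (- gamma * (h1 j + h2 j)) - 1) * xi3 j)%:E)%E.

(* Main.v *)
Set Warnings "-all".
Require Import Defs.
From mathcomp Require Import all_boot all_order all_algebra.
From mathcomp Require Import all_classical all_reals all_analysis.
From mathcomp Require Import ring lra.
Import Order.TTheory GRing.Theory Num.Theory.
Local Open Scope ring_scope.

Lemma coord_bound (R : realType) (tau s a y : R) : 0 < tau -> 0 < a -> 0 <= s ->
  s * y - tau * (s * ln (s / a) + a - s) <= tau * (a * (expR (y / tau) - 1)).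
Proof.
move=> ht ha hs.
have [->|s0] := eqVneq s 0.
  rewrite !(mul0r, mulr0, sub0r, add0r, subr0).
  have : 0 <= tau * (a * expR (y / tau)) by rewrite !mulr_ge0 ?expR_ge0 ?ltW.
  lra.
have sp : 0 < s by rewrite lt0r s0.
have H := expR_ge1Dx (y / tau - ln (s / a)).
rewrite expRD expRN lnK ?posrE ?divr_gt0 // in H.
have H2 : tau * s * (1 + (y / tau - ln (s / a))) <= tau * s * (expR (y / tau) * (s / a)^-1).
  by rewrite ler_pM2l // mulr_gt0.
have E1 : tau * s * (1 + (y / tau - ln (s / a))) = s * y - tau * (s * ln (s / a) + a - s) + tau * a.
  by field; rewrite gt_eqF.
have E2 : tau * s * (expR (y / tau) * (s / a)^-1) = tau * (a * (expR (y / tau) - 1)) + tau * a.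
  by field; rewrite !gt_eqF.
lra.
Qed.

Lemma Fconj_eq (R : realType) (n : nat) (tau : R) (a y : 'I_n -> R) :
  0 < tau -> (forall i, 0 < a i) ->
  Fconj tau a y = (tau * \sum_(i < n) a i * (expR (y i / tau) - 1))%:E.
Proof.
move=> ht ha; apply/eqP; rewrite eq_le; apply/andP; split.
  apply: ge_ereal_sup => _ [s _ <-].
  rewrite /Ffun /KL; case: ifP => [/forallP H|_]; last first.
    by rewrite mulry gtr0_sg // mul1e; rewrite (_ : _ - +oo = -oo)%E // leNye.
  rewrite -EFinM -EFinB lee_fin mulr_sumr -sumrB mulr_sumr; apply: ler_sum => i _.
  by apply: coord_bound => //; case/andP: (H i).
apply: ereal_sup_ubound; exists (fun i => a i * expR (y i / tau)) => //.
rewrite /Ffun /KL; case: ifP => [_|/negP[]]; last first.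
  apply/forallP => i; rewrite mulr_ge0 ?expR_ge0 ?ltW //=.
  by rewrite gt_eqF.
rewrite -EFinM -EFinB; congr EFin.
rewrite mulr_sumr mulr_sumr -sumrB; apply: eq_bigr => i _.
rewrite mulrC (mulrC (a i)) mulrK ?unitfE ?gt_eqF // expRK.
field; rewrite gt_eqF //.
Qed.

Lemma sum_shift (R : realType) (n : nat) (tau l : R) (a f : 'I_n -> R) :
  \sum_(i < n) a i = 1 ->
  \sum_(i < n) a i * (expR ((- (f i + l)) / tau) - 1) =
  (\sum_(i < n) expR (- f i / tau) * a i) * expR (- l / tau) - 1.
Proof.
move=> ha.
rewrite (eq_bigr (fun i => a i * expR (- (f i + l) / tau) - a i)); last first.
  by move=> i _; rewrite mulrBr mulr1.
rewrite sumrB ha mulr_suml; congr (_ - _); apply: eq_bigr => i _.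
rewrite (mulrC (expR _) (a i)) -mulrA -expRD; congr (_ * expR _).
by rewrite opprD mulrDl.
Qed.

Lemma Dl_eq (R : realType) (n m r : nat) (gamma tau1 tau2 : R)
  (a : 'I_n -> R) (b : 'I_m -> R)
  (xi1 : 'I_n -> 'I_r -> R) (xi2 : 'I_m -> 'I_r -> R) (xi3 : 'I_r -> R)
  (f1 : 'I_n -> R) (f2 : 'I_m -> R) (h1 h2 : 'I_r -> R) l1 l2 :
  0 < tau1 -> 0 < tau2 -> simplex_pos a -> simplex_pos b ->
  Dobj gamma tau1 tau2 a b xi1 xi2 xi3
        (fun i => f1 i + l1) (fun j => h1 j - l1)
        (fun i => f2 i + l2) (fun j => h2 j - l2) =
  (- (tau1 * ((\sum_(i < n) expR (- f1 i / tau1) * a i) * expR (- l1 / tau1) - 1))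
   - gamma^-1 * \sum_(i < n) \sum_(j < r) (expR (gamma * (f1 i + h1 j)) - 1) * xi1 i j
   - (tau2 * ((\sum_(i < m) expR (- f2 i / tau2) * b i) * expR (- l2 / tau2) - 1))
   - gamma^-1 * \sum_(i < m) \sum_(j < r) (expR (gamma * (f2 i + h2 j)) - 1) * xi2 i j
   - gamma^-1 * ((\sum_(j < r) expR (- gamma * (h1 j + h2 j)) * xi3 j) * expR (gamma * (l1 + l2))
                 - \sum_(j < r) xi3 j))%:E.
Proof.
move=> t1 t2 [ap as1] [bp bs1].
rewrite /Dobj !Fconj_eq // !sum_shift //.
rewrite -!EFinN -!EFinB; congr EFin.
have e1 : forall k (f : 'I_k -> R) (h : 'I_r -> R) l (xi : 'I_k -> 'I_r -> R),
   \sum_(i < k) \sum_(j < r) (expR (gamma * (f i + l + (h j - l))) - 1) * xi i j =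
   \sum_(i < k) \sum_(j < r) (expR (gamma * (f i + h j)) - 1) * xi i j.
  move=> k f h l xi; apply: eq_bigr => i _; apply: eq_bigr => j _.
  have -> : f i + l + (h j - l) = f i + h j by lra.
  by [].
rewrite (e1 n f1 h1 l1 xi1) (e1 m f2 h2 l2 xi2).
have e3 : \sum_(j < r) (expR (- gamma * (h1 j - l1 + (h2 j - l2))) - 1) * xi3 j =
  (\sum_(j < r) expR (- gamma * (h1 j + h2 j)) * xi3 j) * expR (gamma * (l1 + l2))
                 - \sum_(j < r) xi3 j.
  rewrite mulr_suml -sumrB; apply: eq_bigr => j _.
  rewrite mulrBl mul1r; congr (_ - _).
  rewrite -mulrA (mulrC (xi3 j)) mulrA -expRD; congr (expR _ * _); lra.
by rewrite e3.
Qed.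

Lemma tangent (R : realType) (c x xs : R) : 0 < c ->
  c * (expR xs * (1 + (x - xs))) <= c * expR x.
Proof.
move=> hc; rewrite ler_pM2l //.
rewrite (_ : expR x = expR xs * expR (x - xs)); last by rewrite -expRD addrC subrK.
by rewrite ler_pM2l ?expR_gt0 // expR_ge1Dx.
Qed.

Lemma tangent_lt (R : realType) (c x xs : R) : 0 < c -> x != xs ->
  c * (expR xs * (1 + (x - xs))) < c * expR x.
Proof.
move=> hc hx; rewrite ltr_pM2l //.
rewrite (_ : expR x = expR xs * expR (x - xs)); last by rewrite -expRD addrC subrK.
by rewrite ltr_pM2l ?expR_gt0 // expR_gt1Dx // subr_eq0.
Qed.

Lemma sum_pos (R : realType) (k : nat) (i0 : 'I_k) (F : 'I_k -> R) :
  (forall i, 0 <= F i) -> 0 < F i0 -> 0 < \sum_(i < k) F i.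
Proof.
move=> h h0; rewrite (bigD1 i0) //=.
by apply: ltr_wpDr => //; apply: sumr_ge0.
Qed.

Theorem proposition2 (R : realType) (n m r : nat) (gamma tau1 tau2 : R)
  (a : 'I_n -> R) (b : 'I_m -> R)
  (xi1 : 'I_n -> 'I_r -> R) (xi2 : 'I_m -> 'I_r -> R) (xi3 : 'I_r -> R)
  (f1 : 'I_n -> R) (f2 : 'I_m -> R) (h1 h2 : 'I_r -> R) :
  (0 < n)%N -> (0 < m)%N -> (0 < r)%N ->
  0 < gamma -> 0 < tau1 -> 0 < tau2 ->
  simplex_pos a -> simplex_pos b ->
  (forall i j, 0 <= xi1 i j) -> (forall i j, 0 <= xi2 i j) ->
  (forall j, 0 <= xi3 j) -> (exists j, 0 < xi3 j) ->
  let S := \sum_(j < r) expR (- gamma * (h1 j + h2 j)) * xi3 j in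
  let c1 := ln ((\sum_(i < n) expR (- f1 i / tau1) * a i) / S) in
  let c2 := ln ((\sum_(i < m) expR (- f2 i / tau2) * b i) / S) in
  let g := gamma^-1 in
  let K := (1 - tau1 * tau2 / ((g + tau1) * (g + tau2)))^-1 in
  let lam1 := K * ((tau1 / gamma) / (g + tau1) * c1
                   - (tau1 / gamma) / (g + tau1) * (tau2 / (g + tau2)) * c2) in
  let lam2 := K * ((tau2 / gamma) / (g + tau2) * c2
                   - (tau1 / gamma) / (g + tau1) * (tau2 / (g + tau2)) * c1) in
  let Dl (l1 l2 : R) := Dobj gamma tau1 tau2 a b xi1 xi2 xi3
        (fun i => f1 i + l1) (fun j => h1 j - l1)
        (fun i => f2 i + l2) (fun j => h2 j - l2) in
  (forall l1 l2, (Dl l1 l2 <= Dl lam1 lam2)%E) /\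
  (forall l1 l2, (forall k1 k2, (Dl k1 k2 <= Dl l1 l2)%E) ->
                 l1 = lam1 /\ l2 = lam2).
Proof.
move=> hn hm hr hg ht1 ht2 ha hb hx1 hx2 hx3 [j0 hj0] S c1 c2 g K lam1 lam2 Dl.
set A := \sum_(i < n) expR (- f1 i / tau1) * a i.
set B := \sum_(i < m) expR (- f2 i / tau2) * b i.
have Ap : 0 < A.
  rewrite /A; apply: (@sum_pos _ _ (Ordinal hn)) => [i|].
    by rewrite mulr_ge0 ?expR_ge0 ?ltW //; case: ha.
  by rewrite mulr_gt0 ?expR_gt0 //; case: ha.
have Bp : 0 < B.
  rewrite /B; apply: (@sum_pos _ _ (Ordinal hm)) => [i|].
    by rewrite mulr_ge0 ?expR_ge0 ?ltW //; case: hb.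
  by rewrite mulr_gt0 ?expR_gt0 //; case: hb.
have Sp : 0 < S.
  rewrite /S; apply: (@sum_pos _ _ j0) => [i|]; first by rewrite mulr_ge0 ?expR_ge0.
  by rewrite mulr_gt0 ?expR_gt0.
have L1 : c1 = lam1 / tau1 + gamma * (lam1 + lam2).
  rewrite /lam1 /lam2 /K /g; field.
  have p1 := mulr_gt0 ht1 hg; have p2 := mulr_gt0 ht2 hg.
  apply/and5P; split; apply/eqP => E; nra.
have L2 : c2 = lam2 / tau2 + gamma * (lam1 + lam2).
  rewrite /lam1 /lam2 /K /g; field.
  have p1 := mulr_gt0 ht1 hg; have p2 := mulr_gt0 ht2 hg.
  apply/and5P; split; apply/eqP => E; nra.
have t1n : tau1 != 0 by rewrite gt_eqF.
have t2n : tau2 != 0 by rewrite gt_eqF.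
have gn : gamma != 0 by rewrite gt_eqF.
pose M := S * expR (gamma * (lam1 + lam2)).
have HA : A * expR (- lam1 / tau1) = M.
  have eA : A = S * expR c1.
    by rewrite /c1 lnK ?posrE ?divr_gt0 // mulrC divfK ?gt_eqF.
  rewrite eA L1 -mulrA -expRD /M; congr (S * expR _); field.
  by rewrite t1n.
have HB : B * expR (- lam2 / tau2) = M.
  have eB : B = S * expR c2.
    by rewrite /c2 lnK ?posrE ?divr_gt0 // mulrC divfK ?gt_eqF.
  rewrite eB L2 -mulrA -expRD /M; congr (S * expR _); field.
  by rewrite t2n.
pose Phi l1 l2 := tau1 * A * expR (- l1 / tau1) + tau2 * B * expR (- l2 / tau2)
   + g * S * expR (gamma * (l1 + l2)).
have PhiS : Phi lam1 lam2 = tau1 * M + tau2 * M + g * M.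
  by rewrite /Phi -!mulrA HA HB /M.
have key : forall l1 l2, exists d1 d2 d3 : R,
   [/\ 0 <= d1, 0 <= d2, 0 <= d3, Phi l1 l2 - Phi lam1 lam2 = d1 + d2 + d3
       & ((l1 != lam1 -> 0 < d1) /\ (l2 != lam2 -> 0 < d2))].
  move=> l1 l2.
  have e1 : tau1 * A * (expR (- lam1 / tau1) * (1 + (- l1 / tau1 - - lam1 / tau1)))
            = tau1 * M + M * (lam1 - l1).
    by rewrite -HA; field.
  have e2 : tau2 * B * (expR (- lam2 / tau2) * (1 + (- l2 / tau2 - - lam2 / tau2)))
            = tau2 * M + M * (lam2 - l2).
    by rewrite -HB; field.
  have e3 : g * S * (expR (gamma * (lam1 + lam2)) * (1 + (gamma * (l1 + l2) - gamma * (lam1 + lam2))))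
            = g * M + M * (l1 + l2 - lam1 - lam2).
    by rewrite /M /g; field.
  have c1p : 0 < tau1 * A by rewrite mulr_gt0.
  have c2p : 0 < tau2 * B by rewrite mulr_gt0.
  have c3p : 0 < g * S by rewrite mulr_gt0 ?invr_gt0.
  exists (tau1 * A * expR (- l1 / tau1) - (tau1 * M + M * (lam1 - l1))).
  exists (tau2 * B * expR (- l2 / tau2) - (tau2 * M + M * (lam2 - l2))).
  exists (g * S * expR (gamma * (l1 + l2)) - (g * M + M * (l1 + l2 - lam1 - lam2))).
  split.
  - by rewrite subr_ge0 -e1 tangent.
  - by rewrite subr_ge0 -e2 tangent.
  - by rewrite subr_ge0 -e3 tangent.
  - rewrite PhiS /Phi; lra.
  split.
  - move=> hl; rewrite subr_gt0 -e1 tangent_lt //.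
    apply: contra_neq hl => E.
    have E' : - l1 / tau1 * tau1 = - lam1 / tau1 * tau1 by rewrite E.
    rewrite !divfK // in E'; lra.
  - move=> hl; rewrite subr_gt0 -e2 tangent_lt //.
    apply: contra_neq hl => E.
    have E' : - l2 / tau2 * tau2 = - lam2 / tau2 * tau2 by rewrite E.
    rewrite !divfK // in E'; lra.
pose E1 := gamma^-1 * \sum_(i < n) \sum_(j < r) (expR (gamma * (f1 i + h1 j)) - 1) * xi1 i j.
pose E2 := gamma^-1 * \sum_(i < m) \sum_(j < r) (expR (gamma * (f2 i + h2 j)) - 1) * xi2 i j.
pose C := tau1 + tau2 - E1 - E2 + g * \sum_(j < r) xi3 j.
have DlE : forall l1 l2, Dl l1 l2 = (C - Phi l1 l2)%:E.
  move=> l1 l2; rewrite /Dl Dl_eq //; congr EFin.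
  rewrite /C /Phi /E1 /E2 /g -/A -/B -/S; ring.
split.
  move=> l1 l2; rewrite !DlE lee_fin.
  have [d1 [d2 [d3 [? ? ? ? _]]]] := key l1 l2; lra.
move=> l1 l2 H; have := H lam1 lam2; rewrite !DlE lee_fin => Hle.
have [d1 [d2 [d3 [? ? ? ? [s1 s2]]]]] := key l1 l2.
split; apply/eqP; apply/negPn/negP => hneq.
  by have := s1 hneq; lra.
by have := s2 hneq; lra.
Qed.
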